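(* The function $h_1(x)=\exp\bigl(\cot(x)\bigr)$ is completely monotonic on $(0,\pi/2]$, and the function $h_2(x)=\exp\left(\dfrac{1}{1+\tan(x)}\right)$ is completely monotonic on $(-\pi/4,\pi/4]$.
   Context: A function $f:I\to\mathbb{R}$ on an interval $I\subset\mathbb{R}$ is completely monotonic if it has derivatives of all orders and $(-1)^n f^{(n)}(x)\ge 0$ for all $n=0,1,2,\dots$ and $x\in I$. *)

(* Defs.v *)
From Stdlib Require Import Reals.
From Coquelicot Require Import Coquelicot.
Open Scope R_scope.

Definition cot (x : R) : R := cos x / sin x.

Definition completely_monotonic (f : R -> R) (I : R -> Prop) : Prop :=
  forall (n : nat) (x : R), I x ->
    ex_derive_n f n x /\ 0 <= (-1) ^ n * Derive_n f n x.

Definition h1 (x : R) : R := exp (cot x).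
Definition h2 (x : R) : R := exp (1 / (1 + tan x)).

(* Main.v *)
Require Import Defs.
From Stdlib Require Import Reals Lra.
From Coquelicot Require Import Coquelicot.
Open Scope R_scope.

Inductive PP : (R -> R) -> Prop :=
| PP_const c : 0 <= c -> PP (fun _ => c)
| PP_id : PP (fun y => y)
| PP_add P Q : PP P -> PP Q -> PP (fun y => P y + Q y)
| PP_mul P Q : PP P -> PP Q -> PP (fun y => P y * Q y).

Lemma PP_nonneg P : PP P -> forall y, 0 <= y -> 0 <= P y.
Proof.
  induction 1; intros y Hy; auto.
  - specialize (IHPP1 y Hy); specialize (IHPP2 y Hy); lra.
  - specialize (IHPP1 y Hy); specialize (IHPP2 y Hy); nra.
Qed.

Lemma PP_deriv P : PP P -> exists P', PP P' /\ forall y, is_derive P y (P' y).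
Proof.
  induction 1.
  - exists (fun _ => 0). split. constructor; lra. intros; auto_derive; auto.
  - exists (fun _ => 1). split. constructor; lra. intros; auto_derive; auto.
  - destruct IHPP1 as [P1 [H1 D1]]; destruct IHPP2 as [Q1 [H2 D2]].
    exists (fun y => P1 y + Q1 y). split. constructor; auto.
    intros y; exact (is_derive_plus P Q y _ _ (D1 y) (D2 y)).
  - destruct IHPP1 as [P1 [H1 D1]]; destruct IHPP2 as [Q1 [H2 D2]].
    exists (fun y => P1 y * Q y + P y * Q1 y). split.
    constructor; constructor; auto.
    intros y; exact (is_derive_mult P Q y _ _ (D1 y) (D2 y) Rmult_comm).
Qed.

Lemma locally_interval lo hi x : lo < x < hi -> locally x (fun t => lo < t < hi).
Proof.
  intros Hx.
  assert (He : 0 < Rmin (x - lo) (hi - x)) by (apply Rmin_case; lra).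
  exists (mkposreal _ He). intros t Ht.
  change (Rabs (t - x) < Rmin (x - lo) (hi - x)) in Ht.
  apply Rabs_def2 in Ht. destruct Ht as [H1 H2].
  pose proof (Rmin_l (x - lo) (hi - x)). pose proof (Rmin_r (x - lo) (hi - x)). lra.
Qed.

Lemma cm_gen (f g : R -> R) (K a b lo hi : R) :
  0 <= a -> 0 <= b ->
  (forall x, lo < x < hi -> f x = K * exp (g x)) ->
  (forall x, lo < x < hi -> is_derive g x (-(a * (g x)^2 + b))) ->
  forall n, exists Q, PP Q /\ forall x, lo < x < hi ->
    Derive_n f n x = (-1)^n * (K * exp (g x) * Q (g x)) /\ ex_derive_n f n x.
Proof.
  intros Ha Hb Hf Hg n. induction n as [|n IH].
  - exists (fun _ => 1). split. constructor; lra.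
    intros x Hx. simpl. rewrite Hf; auto. split; [ring|exact I].
  - destruct IH as [Q [HQ HD]].
    destruct (PP_deriv Q HQ) as [Q' [HQ' DQ']].
    exists (fun y => (a * (y * y) + b) * (Q y + Q' y)). split.
    { constructor. constructor. constructor; [constructor; auto|].
      constructor; constructor. constructor; auto. constructor; auto. }
    intros x Hx.
    assert (Hd : is_derive (Derive_n f n) x
      ((-1)^(S n) * (K * exp (g x) * ((a * (g x * g x) + b) * (Q (g x) + Q' (g x)))))).
    { apply is_derive_ext_loc with
        (f := fun y => (-1)^n * (K * exp (g y) * Q (g y))).
      { generalize (locally_interval lo hi x Hx). apply filter_imp.
        intros t Ht. symmetry. apply HD; auto. }
      pose proof (d1 := is_derive_comp exp g x _ _ (is_derive_exp (g x)) (Hg x Hx)).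
      pose proof (d2 := is_derive_comp Q g x _ _ (DQ' (g x)) (Hg x Hx)).
      pose proof (d3 := is_derive_mult (fun y => exp (g y)) (fun y => Q (g y)) x _ _ d1 d2 Rmult_comm).
      pose proof (d5 := is_derive_scal _ x ((-1)^n) _ (is_derive_scal _ x K _ d3)).
      simpl in d5. unfold scal, plus, mult in d5; simpl in d5. unfold mult in d5; simpl in d5.
      match type of d5 with is_derive _ _ ?v =>
        replace ((-1)^(S n) * (K * exp (g x) * ((a * (g x * g x) + b) * (Q (g x) + Q' (g x))))) with v
        by (simpl; ring) end.
      eapply is_derive_ext; [|exact d5]. intros t; simpl; ring. }
    split.
    + simpl. apply is_derive_unique. exact Hd.
    + simpl. eexists. exact Hd.
Qed.

Lemma pow_sq_one n : (-1)^n * (-1)^n = 1.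
Proof. rewrite <- Rpow_mult_distr. replace (-1 * -1) with 1 by ring. apply pow1. Qed.

Lemma cot_deriv x : 0 < x < PI -> is_derive cot x (-(1 * (cot x)^2 + 1)).
Proof.
  intros Hx. pose proof (sin_gt_0 x (proj1 Hx) (proj2 Hx)).
  unfold cot. auto_derive. lra.
  pose proof (sin2_cos2 x). unfold Rsqr in *.
  field_simplify_eq; [|lra]. nra.
Qed.

Definition g2 x := 1 / (1 + tan x) - 1/2.

Lemma tan_gt x : - (PI/4) < x < PI/2 -> -1 < tan x.
Proof.
  intros Hx. replace (-1) with (tan (-(PI/4))) by (rewrite tan_neg, tan_PI4; ring).
  pose proof PI_RGT_0. apply tan_increasing; lra.
Qed.

Lemma g2_deriv x : - (PI/4) < x < PI/2 -> is_derive g2 x (-(2 * (g2 x)^2 + 1/2)).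
Proof.
  intros Hx. pose proof PI_RGT_0.
  pose proof (cos_gt_0 x ltac:(lra) ltac:(lra)).
  pose proof (tan_gt x Hx). unfold tan in *.
  assert (0 < cos x + sin x).
  { apply Rmult_lt_reg_r with (/ cos x). apply Rinv_0_lt_compat; lra.
    replace ((cos x + sin x) * / cos x) with (1 + sin x / cos x) by (field; lra). lra. }
  unfold g2, tan. auto_derive. repeat split; try lra.
  pose proof (sin2_cos2 x). unfold Rsqr in *.
  assert (E : 1 + sin x * / cos x = (cos x + sin x) * / cos x) by (field; lra).
  unfold Rdiv; rewrite E. field_simplify_eq; try (split; lra).
Qed.

Theorem corollary1 :
  completely_monotonic h1 (fun x => 0 < x <= PI / 2) /\
  completely_monotonic h2 (fun x => - (PI / 4) < x <= PI / 4).
Proof.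
  pose proof PI_RGT_0. split.
  - intros n x Hx.
    destruct (cm_gen h1 cot 1 1 1 0 PI ltac:(lra) ltac:(lra)
      ltac:(intros; unfold h1; ring) cot_deriv n) as [Q [HQ HD]].
    destruct (HD x ltac:(lra)) as [E1 E2]. split; auto.
    rewrite E1, <- Rmult_assoc, pow_sq_one.
    assert (0 <= cot x).
    { unfold cot. pose proof (sin_gt_0 x ltac:(lra) ltac:(lra)).
      pose proof (cos_ge_0 x ltac:(lra) ltac:(lra)).
      apply Rmult_le_pos; [lra|]. left; apply Rinv_0_lt_compat; lra. }
    pose proof (PP_nonneg Q HQ _ H0). pose proof (exp_pos (cot x)). nra.
  - intros n x Hx.
    destruct (cm_gen h2 g2 (exp (1/2)) 2 (1/2) (-(PI/4)) (PI/2) ltac:(lra) ltac:(lra)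
      ltac:(intros; unfold h2, g2; rewrite <- exp_plus; f_equal; ring) g2_deriv n) as [Q [HQ HD]].
    destruct (HD x ltac:(lra)) as [E1 E2]. split; auto.
    rewrite E1, <- Rmult_assoc, pow_sq_one.
    assert (0 <= g2 x).
    { unfold g2. pose proof (tan_gt x ltac:(lra)).
      assert (tan x <= 1).
      { rewrite <- tan_PI4. destruct (Req_dec x (PI/4)) as [->|Hn]; [lra|].
        left; apply tan_increasing; lra. }
      replace (1 / (1 + tan x) - 1 / 2) with ((1 - tan x) * / (2 * (1 + tan x))) by (field; lra).
      apply Rmult_le_pos; [lra|]. left; apply Rinv_0_lt_compat; lra. }
    pose proof (PP_nonneg Q HQ _ H0). pose proof (exp_pos (g2 x)). pose proof (exp_pos (1/2)). rewrite Rmult_1_l; repeat apply Rmult_le_pos; lra.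
Qed.
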